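(* Let $n\ge2$, $q=2^m$, and let $\mathbf{H}_X^{(q)}$, $\mathbf{H}_Z^{(q)}$ be $q$-ary labelings of the toric Tanner graphs $\mathcal{G}_X$, $\mathcal{G}_Z$ (as defined in the context) with codes $\mathcal{C}_X^{(q)}$, $\mathcal{C}_Z^{(q)}$, such that $(\mathcal{C}_Z^{(q)})^\perp\subset\mathcal{C}_X^{(q)}$ and every cycle of the labeled graph $\mathcal{G}_X$ has product $1$. Then $$\min\{|x| : x\in\mathcal{C}_X^{(q)}\setminus(\mathcal{C}_Z^{(q)})^\perp\}=\min\{|x| : x\in\mathcal{C}_Z^{(q)}\setminus(\mathcal{C}_X^{(q)})^\perp\}=n,$$ where $|x|$ is the Hamming weight.
   Context: Indices are taken in $\mathbb{Z}_{2n}=\{0,\dots,2n-1\}$ with arithmetic mod $2n$. Variable nodes: $V=\{(i,j)\in\mathbb{Z}_{2n}^2: i+j\text{ even}\}$. $X$-check nodes: $C_X=\{(i,j): i\text{ odd}, j\text{ even}\}$; $Z$-check nodes: $C_Z=\{(i,j): i\text{ even}, j\text{ odd}\}$. Each check node $(i,j)$ is adjacent to the four variable nodes $(i\pm1,j)$, $(i,j\pm1)$. $\mathcal{G}_X$ is the bipartite graph on $V\cup C_X$ and $\mathcal{G}_Z$ on $V\cup C_Z$. A $q$-ary labeling is a matrix $\mathbf{H}_X^{(q)}=(x_{c,v})\in\mathbb{F}_q^{C_X\times V}$ with $x_{c,v}\neq0$ iff $c,v$ adjacent, and similarly $\mathbf{H}_Z^{(q)}=(z_{c,v})\in\mathbb{F}_q^{C_Z\times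 V}$. $\mathcal{C}_X^{(q)}=\ker\mathbf{H}_X^{(q)}\subset\mathbb{F}_q^V$, $\mathcal{C}_Z^{(q)}=\ker\mathbf{H}_Z^{(q)}$, and $\perp$ is with respect to the standard bilinear form on $\mathbb{F}_q^V$. For a cycle $v_1,c_1,v_2,\dots,v_k,c_k,v_1$ of labeled $\mathcal{G}_X$ its product is $\prod_{t=1}^k x_{c_t v_{t+1}}x_{c_t v_t}^{-1}$ (indices of $v$ mod $k$). *)

(* Defs.v *)
From HB Require Import structures.
From mathcomp Require Import all_boot all_order all_algebra.
Set Implicit Arguments. Unset Strict Implicit. Unset Printing Implicit Defensive.
Import GRing.Theory.
Local Open Scope ring_scope.

Notation pos n := ('I_(2 * n) * 'I_(2 * n))%type.

Definition Vnode (n : nat) := {p : pos n | ~~ odd (p.1 + p.2)}.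
HB.instance Definition _ n := Finite.on (Vnode n).
Definition CXnode (n : nat) := {p : pos n | odd p.1 && ~~ odd p.2}.
HB.instance Definition _ n := Finite.on (CXnode n).
Definition CZnode (n : nat) := {p : pos n | ~~ odd p.1 && odd p.2}.
HB.instance Definition _ n := Finite.on (CZnode n).

Definition grid_adj (n : nat) (c v : pos n) : bool :=
  let N := (2 * n)%N in
  [|| ((v.1 : nat) == (c.1 + 1) %% N)%N && (v.2 == c.2),
      ((c.1 : nat) == (v.1 + 1) %% N)%N && (v.2 == c.2),
      (v.1 == c.1) && ((v.2 : nat) == (c.2 + 1) %% N)%N
    | (v.1 == c.1) && ((c.2 : nat) == (v.2 + 1) %% N)%N ].

Definition is_labeling (n : nat) (C : finType) (cpos : C -> pos n)
  (F : fieldType) (H : C -> Vnode n -> F) : Prop :=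
  forall c v, (H c v != 0) = grid_adj (cpos c) (val v).

Definition code (n : nat) (C : finType) (F : finFieldType) (H : C -> Vnode n -> F)
  : {set {ffun Vnode n -> F}} :=
  [set x : {ffun Vnode n -> F} | [forall c, \sum_v H c v * x v == 0]].

Definition dual (n : nat) (F : finFieldType) (S : {set {ffun Vnode n -> F}})
  : {set {ffun Vnode n -> F}} :=
  [set y : {ffun Vnode n -> F} | [forall x in S, \sum_v x v * y v == 0]].

Definition wt (n : nat) (F : fieldType) (x : {ffun Vnode n -> F}) : nat :=
  #|[set v : Vnode n | x v != 0]|.

Definition cycles_product_one (n : nat) (C : finType) (cpos : C -> pos n)
  (F : fieldType) (H : C -> Vnode n -> F) : Prop :=
  forall (k : nat) (vs : 'I_k -> Vnode n) (cs : 'I_k -> C),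
    (2 <= k)%N -> injective vs -> injective cs ->
    (forall t, grid_adj (cpos (cs t)) (val (vs t))) ->
    (forall t, grid_adj (cpos (cs t)) (val (vs (ordS t)))) ->
    \prod_(t < k) (H (cs t) (vs (ordS t)) / H (cs t) (vs t)) = 1.

Definition cxpos (n : nat) (c : CXnode n) : pos n := val c.
Definition czpos (n : nat) (c : CZnode n) : pos n := val c.

(* Main.v *)
Require Import Defs.
From HB Require Import structures.
From mathcomp Require Import all_boot all_order all_algebra.
From mathcomp Require Import all_field zify ring lra.
Set Implicit Arguments. Unset Strict Implicit. Unset Printing Implicit Defensive.
Import GRing.Theory.
Local Open Scope ring_scope.
Local Close Scope ring_scope.

Lemma congE n x y : (x == y %[mod 2*n]) = (odd x == odd y) && (x./2 == y./2 %[mod n]).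
Proof.
rewrite -{1}(odd_double_half x) -{1}(odd_double_half y) -!mul2n.
case: (odd x); case: (odd y) => /=.
- by rewrite eqn_modDl -!muln_modr eqn_pmul2l.
- apply: negbTE; apply/negP => /eqP h.
  by have := congr1 odd h; rewrite !odd_mod ?mul2n ?oddD ?odd_double.
- apply: negbTE; apply/negP => /eqP h.
  by have := congr1 odd h; rewrite !odd_mod ?mul2n ?oddD ?odd_double.
- by rewrite !add0n -!muln_modr eqn_pmul2l.
Qed.
Lemma eqn_modS m n d : (m.+1 == n.+1 %[mod d]) = (m == n %[mod d]).
Proof. by rewrite -[m.+1]addn1 -[n.+1]addn1 eqn_modDr. Qed.
Ltac cnorm := rewrite ?congE ?mul2n /= ?oddD ?odd_double ?halfD ?oddD ?odd_double ?doubleK /= ?add0n ?addn0 ?add1n ?addn1 ?addnS ?addSn ?eqn_modS.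
Ltac cfin := by do ![case/orP | case/andP | move/eqP => -> | move/eqP => <-]; rewrite /= ?eqxx ?orbT.

Definition ordN (n : nat) (Hn : (0 < 2 * n)%N) (k : nat) : 'I_(2 * n) :=
  Ordinal (ltn_pmod k Hn).
Definition P n (Hn : (0 < 2*n)%N) (t : bool) (x y : nat) : pos n :=
  if t then (ordN Hn y, ordN Hn x) else (ordN Hn x, ordN Hn y).

Lemma ordN_eq n (Hn : (0 < 2*n)%N) a b : (ordN Hn a == ordN Hn b) = (a == b %[mod 2*n])%N.
Proof. by []. Qed.

Lemma P_eq n (Hn : (0 < 2*n)%N) t x y x' y' :
  (P Hn t x y == P Hn t x' y') = (x == x' %[mod 2*n])%N && (y == y' %[mod 2*n])%N.
Proof. by case: t; rewrite /P xpair_eqE !ordN_eq // andbC. Qed.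

Lemma adjP n (Hn : (0 < 2*n)%N) t x y x' y' :
  grid_adj (P Hn t x y) (P Hn t x' y') =
  [|| (x' == x + 1 %[mod 2*n])%N && (y' == y %[mod 2*n])%N,
      (x == x' + 1 %[mod 2*n])%N && (y' == y %[mod 2*n])%N,
      (x' == x %[mod 2*n])%N && (y' == y + 1 %[mod 2*n])%N
    | (x' == x %[mod 2*n])%N && (y == y' + 1 %[mod 2*n])%N].
Proof.
rewrite /grid_adj /P; case: t => /=; rewrite !modnDml !ordN_eq //.
set A := (y' == _ %[mod _])%N; set B := (y == _ %[mod _])%N; set C := (x' == x %[mod _])%N.
set D := (y' == y %[mod _])%N; set E := (x' == _ %[mod _])%N; set G := (x == _ %[mod _])%N.
by case: A; case: B; case: C; case: D; case: E; case: G.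
Qed.

Lemma E1 n (Hn : (0 < 2*n)%N) t a b a' b' :
  grid_adj (P Hn t (2*a'+1) (2*b')) (P Hn t (2*a+1) (2*b+1)) ->
  (P Hn t (2*a'+1) (2*b') == P Hn t (2*a+1) (2*b)) ||
  (P Hn t (2*a'+1) (2*b') == P Hn t (2*a+1) (2*(b+1))).
Proof. rewrite adjP !P_eq; cnorm; cfin. Qed.

Lemma E2 n (Hn : (0 < 2*n)%N) t a b a' b' :
  grid_adj (P Hn t (2*a'+1) (2*b')) (P Hn t (2*a+2) (2*b)) ->
  (P Hn t (2*a'+1) (2*b') == P Hn t (2*a+1) (2*b)) ||
  (P Hn t (2*a'+1) (2*b') == P Hn t (2*(a+1)+1) (2*b)).
Proof. rewrite adjP !P_eq; cnorm; cfin. Qed.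

Lemma E3 n (Hn : (0 < 2*n)%N) t a b i j (k l : bool) :
  grid_adj (P Hn t (2*a+2) (2*b+1)) (P Hn t (2*i+k) (2*j+l)) ->
  [|| P Hn t (2*i+k) (2*j+l) == P Hn t (2*a+1) (2*b+1),
      P Hn t (2*i+k) (2*j+l) == P Hn t (2*(a+1)+1) (2*b+1),
      P Hn t (2*i+k) (2*j+l) == P Hn t (2*a+2) (2*b)
    | P Hn t (2*i+k) (2*j+l) == P Hn t (2*a+2) (2*(b+1))].
Proof. rewrite adjP !P_eq; case: k; case: l; cnorm; cfin. Qed.

Lemma E4 n (Hn : (0 < 2*n)%N) t a b :
  [/\ grid_adj (P Hn t (2*a+1) (2*b)) (P Hn t (2*a+1) (2*b+1)),
      grid_adj (P Hn t (2*a+1) (2*(b+1))) (P Hn t (2*a+1) (2*b+1)),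
      grid_adj (P Hn t (2*a+1) (2*b)) (P Hn t (2*a+2) (2*b)),
      grid_adj (P Hn t (2*(a+1)+1) (2*b)) (P Hn t (2*a+2) (2*b))
    & grid_adj (P Hn t (2*a+2) (2*b+1)) (P Hn t (2*a+2) (2*(b+1)))].
Proof. by split; rewrite adjP; cnorm; rewrite ?eqxx ?orbT. Qed.

Lemma modS_neq n b : (1 < n)%N -> (b == b.+1 %[mod n]) = false.
Proof.
move=> h; rewrite -[b.+1]addn1 -{1}[b]addn0 eqn_modDl !modn_small //; exact: ltnW.
Qed.

Lemma E5 n (Hn : (0 < 2*n)%N) t a b : (1 < n)%N ->
  (P Hn t (2*a+1) (2*b) == P Hn t (2*a+1) (2*(b+1))) = false /\
  (P Hn t (2*a+1) (2*b) == P Hn t (2*(a+1)+1) (2*b)) = false.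
Proof. by move=> h; rewrite !P_eq; cnorm; rewrite !modS_neq ?andbF. Qed.

Definition tfst n t (p : pos n) : nat := if t then p.2 else p.1.
Definition tsnd n t (p : pos n) : nat := if t then p.1 else p.2.

Lemma P_of n (Hn : (0 < 2*n)%N) t (p : pos n) : p = P Hn t (tfst t p) (tsnd t p).
Proof.
case: p => x y; rewrite /P /tfst /tsnd; case: t => /=;
  by congr pair; apply: val_inj; rewrite /= modn_small.
Qed.

Lemma shift n a u : (0 < n)%N -> (a + (u + (n-1)*a) %% n == u %[mod n]).
Proof.
move=> hn; rewrite modnDmr.
have -> : (a + (u + (n - 1) * a) = a * n + u)%N by rewrite mulnBl mul1n; nia.
by rewrite modnMDl.
Qed.
Lemma shift' n a u : (0 < n)%N -> (u == a + (u + (n-1)*a) %% n %[mod n]).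
Proof. by move=> hn; rewrite eq_sym shift. Qed.

Lemma cover n (Hn : (0 < 2*n)%N) t (p : pos n) a0 b0 : ~~ odd (p.1 + p.2) ->
  exists i j, [/\ (i < n)%N, (j < n)%N &
    (p == P Hn t (2*(a0+i)+1) (2*(b0+j)+1)) || (p == P Hn t (2*(a0+i)+2) (2*(b0+j)))].
Proof.
move=> hp; have hn : (0 < n)%N by rewrite muln_gt0 in Hn; case/andP: Hn.
have hxy : odd (tfst t p) = odd (tsnd t p).
  by move: hp; rewrite /tfst /tsnd oddD; case: t; case: (odd p.1); case: (odd p.2).
have Pp := P_of Hn t p.
set x := tfst t p in hxy Pp *; set y := tsnd t p in hxy Pp *.
case ho : (odd x).
- exists ((x./2 + (n-1)*a0) %% n), ((y./2 + (n-1)*b0) %% n); split; try exact: ltn_pmod.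
  apply/orP; left; rewrite Pp P_eq; cnorm; by rewrite -hxy ho /= !shift'.
- exists ((x./2 + (n-1)*a0.+1) %% n), ((y./2 + (n-1)*b0) %% n); split; try exact: ltn_pmod.
  apply/orP; right; rewrite Pp P_eq; cnorm.
  by rewrite -hxy ho /= -addSn !shift'.
Qed.

Lemma P_par n (Hn : (0 < 2*n)%N) t x y :
  odd ((P Hn t x y).1 + (P Hn t x y).2) = odd (x + y).
Proof.
have h2 : odd (2 * n) = false by rewrite mul2n odd_double.
by case: t; rewrite /= !oddD !odd_mod // addbC.
Qed.

Lemma parEh n (Hn : (0 < 2*n)%N) t a b :
  ~~ odd ((P Hn t (2*a+1) (2*b+1)).1 + (P Hn t (2*a+1) (2*b+1)).2).
Proof. by rewrite P_par !mul2n !oddD !odd_double. Qed.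
Lemma parEv n (Hn : (0 < 2*n)%N) t a b :
  ~~ odd ((P Hn t (2*a+2) (2*b)).1 + (P Hn t (2*a+2) (2*b)).2).
Proof. by rewrite P_par !mul2n !oddD !odd_double. Qed.

Definition mkEh n (Hn : (0 < 2*n)%N) t a b : Vnode n := @exist (pos n) (fun p => ~~ odd (p.1 + p.2)) _ (parEh Hn t a b).
Definition mkEv n (Hn : (0 < 2*n)%N) t a b : Vnode n := @exist (pos n) (fun p => ~~ odd (p.1 + p.2)) _ (parEv Hn t a b).

Local Open Scope ring_scope.
Lemma sum2 (F : fieldType) (V E : finType) (A : V -> E -> F) (g : V -> F) e c1 c2 :
  c1 != c2 -> (forall c, A c e != 0 -> (c == c1) || (c == c2)) ->
  \sum_c g c * A c e = g c1 * A c1 e + g c2 * A c2 e.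
Proof.
move=> ne H; rewrite (bigD1 c1) // (bigD1 c2) /=; last by rewrite eq_sym.
rewrite addrA big1 ?addr0 // => c /andP [] n2 n1.
have := H c; case: (A c e =P 0) => [->|_]; first by rewrite mulr0.
by move/(_ isT); rewrite (negbTE n1) (negbTE n2).
Qed.

Lemma sum1 (F : fieldType) (E : finType) (g : E -> F) e :
  (forall e', e' != e -> g e' = 0) -> \sum_e' g e' = g e.
Proof. by move=> H; rewrite (bigD1 e) //= big1 ?addr0. Qed.

Lemma valEh n (Hn : (0 < 2*n)%N) t a b : val (mkEh Hn t a b) = P Hn t (2*a+1) (2*b+1).
Proof. by []. Qed.
Lemma valEv n (Hn : (0 < 2*n)%N) t a b : val (mkEv Hn t a b) = P Hn t (2*a+2) (2*b).
Proof. by []. Qed.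

Lemma decomp x : x = (2 * x./2 + odd x)%N.
Proof. by rewrite addnC mul2n odd_double_half. Qed.

Local Open Scope ring_scope.
Local Open Scope ring_scope.

Fixpoint pcol (F : fieldType) (V E : finType) (A : V -> E -> F) (w : E -> F)
  (W : nat -> nat -> V) (Ev : nat -> nat -> E) (i : nat) : F :=
  if i is i'.+1 then
    (w (Ev i' 0%N) - pcol A w W Ev i' * A (W i' 0%N) (Ev i' 0%N)) / A (W i'.+1 0%N) (Ev i' 0%N)
  else 0.
Fixpoint psi (F : fieldType) (V E : finType) (A : V -> E -> F) (w : E -> F)
  (W : nat -> nat -> V) (Ev Eh : nat -> nat -> E) (i j : nat) : F :=
  if j is j'.+1 then
    (w (Eh i j') - psi A w W Ev Eh i j' * A (W i j') (Eh i j')) / A (W i j'.+1) (Eh i j')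
  else pcol A w W Ev i.

Lemma modn_add_inj n a i i' : (i < n)%N -> (i' < n)%N -> (a + i == a + i' %[mod n])%N -> i = i'.
Proof. by move=> hi hi'; rewrite eqn_modDl !modn_small // => /eqP. Qed.

Lemma lower (n : nat) (Hn2 : (1 < n)%N) (Hn : (0 < 2*n)%N) (t : bool) (F : fieldType)
  (V Q : finType) (vpos : V -> pos n) (qpos : Q -> pos n)
  (A : V -> Vnode n -> F) (B : Q -> Vnode n -> F)
  (HA : forall c e, (A c e != 0) = grid_adj (vpos c) (val e))
  (HB : forall f e, (B f e != 0) = grid_adj (qpos f) (val e))
  (vinj : injective vpos)
  (Hc : forall c, exists a b, vpos c = P Hn t (2*a+1) (2*b))
  (mkV : nat -> nat -> V) (HmkV : forall a b, vpos (mkV a b) = P Hn t (2*a+1) (2*b))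
  (mkQ : nat -> nat -> Q) (HmkQ : forall a b, qpos (mkQ a b) = P Hn t (2*a+2) (2*b+1))
  (Hort : forall c f, \sum_e A c e * B f e = 0)
  (s w : Vnode n -> F)
  (Hs : forall c, \sum_e A c e * s e = 0)
  (Hw : forall f, \sum_e B f e * w e = 0)
  (a0 b1 : nat)
  (cut1 : forall e a, val e = P Hn t (2*a+1) (2*b1+1) -> s e = 0)
  (cut2 : forall e b, val e = P Hn t (2*a0+2) (2*b) -> s e = 0) :
  \sum_e s e * w e = 0.
Proof.
have hn0 : (0 < n)%N := ltnW Hn2.
pose A0 := a0.+1; pose B0 := b1.+1.
pose W i j := mkV (A0 + i)%N (B0 + j)%N.
pose Eh i j := mkEh Hn t (A0 + i)%N (B0 + j)%N.
pose Ev i j := mkEv Hn t (A0 + i)%N (B0 + j)%N.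
pose ps := psi A w W Ev Eh.
pose phi c := if [pick ij : 'I_n * 'I_n | vpos c == P Hn t (2*(A0 + ij.1)+1) (2*(B0+ij.2))]
   is Some ij then ps ij.1 ij.2 else 0.
have phiW i j : (i < n)%N -> (j < n)%N -> phi (W i j) = ps i j.
  move=> hi hj; rewrite /phi; case: pickP => [[i' j'] /= | H].
    rewrite HmkV P_eq; cnorm => /andP [h1 h2].
    by rewrite (modn_add_inj hi (ltn_ord i') h1) (modn_add_inj hj (ltn_ord j') h2).
  by have := H (Ordinal hi, Ordinal hj); rewrite /= HmkV eqxx.
have WS i j : W i j.+1 = mkV (A0 + i) (B0 + j + 1) by rewrite /W; f_equal; lia.
have WS' i j : W i.+1 j = mkV (A0 + i + 1) (B0 + j) by rewrite /W; f_equal; lia.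
have endH i j c : A c (Eh i j) != 0 -> (c == W i j) || (c == W i j.+1).
  have [a [b hab]] := Hc c; rewrite HA hab valEh => /E1.
  by rewrite WS -hab -!HmkV !(inj_eq vinj).
have endV i j c : A c (Ev i j) != 0 -> (c == W i j) || (c == W i.+1 j).
  have [a [b hab]] := Hc c; rewrite HA hab valEv => /E2.
  by rewrite WS' -hab -!HmkV !(inj_eq vinj).
have neqH i j : W i j != W i j.+1.
  by rewrite WS -(inj_eq vinj) !HmkV (proj1 (E5 _ _ _ _ Hn2)).
have neqV i j : W i j != W i.+1 j.
  by rewrite WS' -(inj_eq vinj) !HmkV (proj2 (E5 _ _ _ _ Hn2)).
have [nzH1 nzH2 nzV1 nzV2 nzQ] : [/\ forall i j, A (W i j) (Eh i j) != 0,
    forall i j, A (W i j.+1) (Eh i j) != 0, forall i j, A (W i j) (Ev i j) != 0,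
    forall i j, A (W i.+1 j) (Ev i j) != 0 &
    forall a b, B (mkQ a b) (mkEv Hn t a (b+1)) != 0].
  split=> i j; rewrite ?WS ?WS' ?HA ?HB ?HmkV ?HmkQ ?valEh ?valEv;
   try by case: (E4 Hn t (A0 + i) (B0 + j)).
  by case: (E4 Hn t i j).
pose wp e := w e - \sum_c phi c * A c e.
have C1 i j : (i < n)%N -> (j.+1 < n)%N -> wp (Eh i j) = 0.
  move=> hi hj; rewrite /wp (@sum2 _ _ _ A phi (Eh i j) _ _ (neqH i j) (endH i j)) !phiW // ?(ltnW hj) //.
  rewrite /ps /= divfK ?nzH2 //; ring.
have C2 i : (i.+1 < n)%N -> wp (Ev i 0%N) = 0.
  move=> hi; rewrite /wp (@sum2 _ _ _ A phi (Ev i 0%N) _ _ (neqV i 0%N) (endV i 0%N)) !phiW // ?(ltnW hi) //.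
  rewrite /ps /= divfK ?nzV2 //; ring.
have Face f : \sum_e B f e * wp e = 0.
  rewrite /wp; under eq_bigr do rewrite mulrBr mulr_sumr.
  rewrite sumrB Hw exchange_big /= big1 ?subr0 // => c _.
  under eq_bigr do rewrite mulrCA.
  rewrite -mulr_sumr (eq_bigr (fun e => A c e * B f e)) ?Hort ?mulr0 // => e _.
  exact: mulrC.
have EvS i j : Ev i j.+1 = mkEv Hn t (A0 + i) (B0 + j + 1) by rewrite /Ev; f_equal; lia.
have EhS i j : Eh i.+1 j = mkEh Hn t (A0 + i + 1) (B0 + j) by rewrite /Eh; f_equal; lia.
have C3 j i : (i.+1 < n)%N -> (j < n)%N -> wp (Ev i j) = 0.
  elim: j => [|j IH] hi hj; first exact: C2.
  have := Face (mkQ (A0+i) (B0+j)).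
  rewrite (@sum1 _ _ (fun e => B (mkQ (A0+i) (B0+j)) e * wp e) (Ev i j.+1)) => [/eqP|e ne].
    by rewrite mulf_eq0 EvS (negbTE (nzQ _ _)) /= => /eqP.
  case: (B (mkQ (A0+i) (B0+j)) e =P 0) => [->|/eqP hB]; first by rewrite mul0r.
  move: hB; rewrite HB HmkQ (P_of Hn t (val e)) [tfst _ _]decomp [tsnd _ _]decomp => /E3.
  rewrite -!decomp -!P_of.
  case/or4P.
  - by rewrite -valEh val_eqE => /eqP ->; rewrite C1 ?mulr0 // ltnW.
  - by rewrite -valEh val_eqE -EhS => /eqP ->; rewrite C1 ?mulr0.
  - by rewrite -valEv val_eqE => /eqP ->; rewrite IH ?mulr0 // ltnW.
  - by rewrite -valEv val_eqE -EvS => /eqP eq; rewrite eq eqxx in ne.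
have C4 e : s e * wp e = 0.
  have [i [j [hi hj]]] := cover Hn t A0 B0 (valP e).
  case/orP.
  - rewrite -valEh val_eqE => /eqP ->.
    case: (ltnP j.+1 n) => hj'; first by rewrite C1 ?mulr0.
    rewrite (cut1 (Eh i j) (A0 + i)) ?mul0r // valEh; apply/eqP; rewrite P_eq; cnorm.
    rewrite eqxx /=; have -> : ((b1 + j).+1 = b1 + n)%N by lia.
    by rewrite modnDr.
  - rewrite -valEv val_eqE => /eqP ->.
    case: (ltnP i.+1 n) => hi'; first by rewrite C3 ?mulr0.
    rewrite (cut2 (Ev i j) (B0 + j)) ?mul0r // valEv; apply/eqP; rewrite P_eq; cnorm.
    rewrite eqxx andbT; have -> : ((a0 + i).+1 = a0 + n)%N by lia.
    by rewrite modnDr.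
rewrite (eq_bigr (fun e => s e * wp e + \sum_c phi c * (A c e * s e))); last first.
  move=> e _; have -> : \sum_c phi c * (A c e * s e) = s e * \sum_c phi c * A c e.
    by rewrite mulr_sumr; apply: eq_bigr => c _; rewrite [A c e * _]mulrC mulrCA.
  by rewrite /wp mulrBr subrK.
rewrite big_split /= big1 ?add0r //; rewrite exchange_big /= big1 // => c _.
by rewrite -mulr_sumr Hs mulr0.
Qed.

Local Open Scope ring_scope.

Lemma sum2g (F : fieldType) (I : finType) (g : I -> F) k1 k2 :
  k1 != k2 -> (forall k, g k != 0 -> (k == k1) || (k == k2)) ->
  \sum_k g k = g k1 + g k2.
Proof.
move=> ne H; rewrite (bigD1 k1) // (bigD1 k2) /=; last by rewrite eq_sym.
rewrite addrA big1 ?addr0 // => k /andP [] n2 n1.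
have := H k; case: (g k =P 0) => [->|_] //.
by move/(_ isT); rewrite (negbTE n1) (negbTE n2).
Qed.

Lemma mkEh_mod n (Hn : (0 < 2*n)%N) t a b :
  mkEh Hn t a (b %% n) = mkEh Hn t a b.
Proof.
apply: val_inj; rewrite !valEh; apply/eqP; rewrite P_eq eqxx /=.
rewrite eqn_modDr -!muln_modr eqn_pmul2l // modn_mod.
exact: eqxx. Qed.

Lemma loop n (Hn2 : (1 < n)%N) (Hn : (0 < 2*n)%N) (t : bool) (F : fieldType)
  (V : finType) (vpos : V -> pos n) (A : V -> Vnode n -> F)
  (HA : forall c e, (A c e != 0) = grid_adj (vpos c) (val e))
  (vinj : injective vpos)
  (Hc : forall c, exists a b, vpos c = P Hn t (2*a+1) (2*b))
  (mkV : nat -> nat -> V) (HmkV : forall a b, vpos (mkV a b) = P Hn t (2*a+1) (2*b))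
  (two : (1 + 1 : F) = 0)
  (Hprod : \prod_(k < n) (A (mkV 0%N (k+1)%N) (mkEh Hn t 0 k) /
                          A (mkV 0%N (k+1)%N) (mkEh Hn t 0 (k+1))) = 1) :
  exists s : {ffun Vnode n -> F},
    [/\ forall c, \sum_e A c e * s e = 0, wt s = n,
        forall e, s e != 0 -> exists k, val e = P Hn t 1 (2*k+1)
      & s (mkEh Hn t 0 0) = 1].
Proof.
have hn0 : (0 < n)%N := ltnW Hn2.
pose E k := mkEh Hn t 0 k.
pose r (k : nat) := A (mkV 0%N (k+1)%N) (E k) / A (mkV 0%N (k+1)%N) (E (k+1)%N).
pose sv (k : nat) := \prod_(j < k) r j.
pose s := [ffun e => \sum_(k < n) (if e == E k then sv k else 0)].
have Einj (k k' : 'I_n) : (E k == E k') = (k == k').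
  rewrite -val_eqE !valEh P_eq eqxx /= eqn_modDr -!muln_modr eqn_pmul2l //.
  by rewrite !modn_small.
have sE (k : 'I_n) : s (E k) = sv k.
  rewrite ffunE (bigD1 k) //= eqxx big1 ?addr0 // => k' ne.
  by rewrite Einj eq_sym (negbTE ne).
have s0 e : (forall k : 'I_n, e != E k) -> s e = 0.
  by move=> H; rewrite ffunE big1 // => k _; rewrite (negbTE (H k)).
have nzE c k : A c (E k) != 0 -> (vpos c == P Hn t 1 (2*k)) || (vpos c == P Hn t 1 (2*(k+1))).
  by have [a [b hab]] := Hc c; rewrite HA hab valEh => /E1.
have rnz j : r j != 0.
  rewrite /r mulf_neq0 ?invr_neq0 // HA HmkV valEh.
    by case: (E4 Hn t 0 j).
  by case: (E4 Hn t 0 (j+1)).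
have svnz k : sv k != 0 by apply/prodf_neq0 => j _.
have svmod j : (j < n)%N -> sv ((j+1) %% n)%N = sv (j+1)%N.
  move=> hj; case: (ltnP (j+1) n) => hj'; first by rewrite modn_small.
  have -> : (j + 1 = n)%N by lia.
  by rewrite modnn /sv big_ord0 Hprod.
exists s; split.
- move=> c.
  rewrite (eq_bigr (fun e => \sum_(k < n) (if e == E k then A c (E k) * sv k else 0))); last first.
    move=> e _; rewrite ffunE mulr_sumr; apply: eq_bigr => k _.
    by case: eqP => [->|_]; rewrite ?mulr0.
  rewrite exchange_big /=.
  rewrite (eq_bigr (fun k : 'I_n => A c (E k) * sv k)); last first.
    by move=> k _; rewrite -big_mkcond big_pred1_eq.
  have [a [b hab]] := Hc c.
  case: (eqVneq (a %% n)%N 0) => ha; last first.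
    rewrite big1 // => k _; case: (A c (E k) =P 0) => [->|/eqP]; first by rewrite mul0r.
    move/nzE; rewrite hab !P_eq; cnorm; rewrite mod0n (negbTE ha) //.
  set j := ((b + (n-1)) %% n)%N.
  have hj : (j < n)%N := ltn_pmod _ hn0.
  have hcj : c = mkV 0%N (j+1)%N.
    apply: vinj; rewrite hab HmkV; apply/eqP; rewrite P_eq; cnorm.
    rewrite ha mod0n eqxx /= /j -addn1 modnDml -addnA subnK // modnDr.
    exact: eqxx.
  have hk2 : ((j+1) %% n < n)%N := ltn_pmod _ hn0.
  rewrite hcj (@sum2g _ _ _ (Ordinal hj) (Ordinal hk2)) /=.
  - have svS : sv (j+1)%N = sv j * r j by rewrite addn1 /sv big_ord_recr.
    rewrite svmod // /E mkEh_mod svS /r.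
    set a1 := A _ (mkEh Hn t 0 j); set a2 := A _ (mkEh Hn t 0 (j+1)).
    have a2nz : a2 != 0 by rewrite /a2 HA HmkV valEh; case: (E4 Hn t 0 (j+1)).
    have -> : a2 * (sv j * (a1 / a2)) = a1 * sv j by field.
    by rewrite -mulr2n -mulr_natl mulr2n two mul0r.
  - rewrite -val_eqE /= -{1}(modn_small hj) addn1 modS_neq //.
  - move=> k; rewrite mulf_eq0 negb_or => /andP [/nzE + _].
    rewrite HmkV !P_eq; cnorm; rewrite -!val_eqE /= eqxx /=; case/orP => h.
      by move: h; rewrite (modn_small (ltn_ord k)) => /eqP ->; rewrite eqxx orbT.
    by move: h; rewrite eqn_modDr (modn_small hj) (modn_small (ltn_ord k)) => /eqP ->; rewrite eqxx.
- rewrite /wt.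
  have -> : [set e | s e != 0] = [set E k | k : 'I_n].
    apply/setP => e; rewrite inE.
    case: (pickP (fun k : 'I_n => e == E k)) => [k /eqP -> | H].
      by rewrite sE svnz; apply/esym/imsetP; exists k.
    rewrite s0 ?eqxx /=; last by move=> k; exact: (negbT (H k)).
    apply/esym/negbTE/imsetP => [[k _ ek]]; by move: (H k); rewrite ek eqxx.
  by rewrite card_imset ?card_ord // => k k' /eqP; rewrite Einj => /eqP.
- move=> e; case: (pickP (fun k : 'I_n => e == E k)) => [k /eqP -> _ | H].
    by exists k; rewrite valEh.
  by rewrite s0 ?eqxx // => k; rewrite (negbT (H k)).
- by have := sE (Ordinal hn0); rewrite /sv big_ord0.
Qed.

Local Open Scope ring_scope.

Lemma oddN n (Hn : (0 < 2*n)%N) k : odd (ordN Hn k) = odd k.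
Proof. by rewrite /= odd_mod // mul2n odd_double. Qed.

Lemma tfstP n (Hn : (0 < 2*n)%N) t x y : tfst t (P Hn t x y) = (x %% (2*n))%N.
Proof. by case: t. Qed.
Lemma tsndP n (Hn : (0 < 2*n)%N) t x y : tsnd t (P Hn t x y) = (y %% (2*n))%N.
Proof. by case: t. Qed.

Lemma halfmod n k (r : bool) : (((2*k + r) %% (2*n))./2 = k %% n)%N.
Proof.
case: (posnP n) => [->|hn]; first by rewrite muln0 !modn0 mul2n addnC half_bit_double.
rewrite -modnDml -muln_modr modn_small.
  by rewrite mul2n addnC half_bit_double.
have := ltn_pmod k hn; case: r => /=; lia.
Qed.

Lemma Hc_gen n (Hn : (0 < 2*n)%N) t (p : pos n) :
  odd (tfst t p) -> ~~ odd (tsnd t p) -> exists a b, p = P Hn t (2*a+1) (2*b).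
Proof.
move=> h1 h2; exists (tfst t p)./2, (tsnd t p)./2.
have e1 := decomp (tfst t p); have e2 := decomp (tsnd t p).
rewrite h1 in e1; rewrite (negbTE h2) addn0 in e2.
by rewrite {1}(P_of Hn t p) -e1 -e2.
Qed.

Lemma miss n (F : fieldType) (s : {ffun Vnode n -> F}) (f : Vnode n -> 'I_n) :
  (wt s < n)%N -> exists b : 'I_n, forall e, f e = b -> s e = 0.
Proof.
move=> hw; set S := [set e | s e != 0].
have hc : (#|f @: S| < n)%N by apply: leq_ltn_trans (leq_imset_card _ _) hw.
case: (pickP (fun b => b \notin f @: S)) => [b hb | H].
  exists b => e he; apply/eqP; apply: contraNT hb => hs.
  by rewrite -he; apply: imset_f; rewrite inE.
have : f @: S = [set: 'I_n].
  by apply/setP => b; rewrite inE; move: (H b) => /negbFE.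
by move=> eq; move: hc; rewrite eq cardsT card_ord ltnn.
Qed.

Lemma cuts n (Hn : (0 < 2*n)%N) t (F : fieldType) (s : {ffun Vnode n -> F}) :
  (wt s < n)%N ->
  (exists b1, forall e a, val e = P Hn t (2*a+1) (2*b1+1) -> s e = 0) /\
  (exists a0, forall e b, val e = P Hn t (2*a0+2) (2*b) -> s e = 0).
Proof.
move=> hw; have hn : (0 < n)%N by rewrite muln_gt0 in Hn; case/andP: Hn.
split.
  have [b hb] := miss (fun e => Ordinal (ltn_pmod ((tsnd t (val e))./2) hn)) hw.
  exists b => e a he; apply: hb; apply: val_inj => /=.
  by rewrite he tsndP (halfmod n b true) !modn_small.
have [b hb] := miss (fun e => Ordinal (ltn_pmod ((tfst t (val e))./2 + (n-1)) hn)) hw.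
exists b => e a he; apply: hb; apply: val_inj => /=.
rewrite he tfstP.
have -> : (2 * b + 2 = 2 * b.+1 + false)%N by rewrite addn0 mulnS; lia.
rewrite halfmod modnDml.
have -> : (b.+1 + (n - 1) = b + n)%N by lia.
by rewrite modnDr modn_small.
Qed.

Local Open Scope ring_scope.

Lemma oddP1 n (Hn : (0 < 2*n)%N) t x y : odd (P Hn t x y).1 = odd (if t then y else x).
Proof. by case: t; rewrite /= odd_mod // mul2n odd_double. Qed.
Lemma oddP2 n (Hn : (0 < 2*n)%N) t x y : odd (P Hn t x y).2 = odd (if t then x else y).
Proof. by case: t; rewrite /= odd_mod // mul2n odd_double. Qed.

Ltac parsolve := rewrite oddP1 oddP2 /= !mul2n !oddD !odd_double.

Lemma pCXf n (Hn : (0 < 2*n)%N) a b :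
  odd (P Hn false (2*a+1) (2*b)).1 && ~~ odd (P Hn false (2*a+1) (2*b)).2.
Proof. by parsolve. Qed.
Lemma pCZf n (Hn : (0 < 2*n)%N) a b :
  ~~ odd (P Hn false (2*a+2) (2*b+1)).1 && odd (P Hn false (2*a+2) (2*b+1)).2.
Proof. by parsolve. Qed.
Lemma pCZt n (Hn : (0 < 2*n)%N) a b :
  ~~ odd (P Hn true (2*a+1) (2*b)).1 && odd (P Hn true (2*a+1) (2*b)).2.
Proof. by parsolve. Qed.
Lemma pCXt n (Hn : (0 < 2*n)%N) a b :
  odd (P Hn true (2*a+2) (2*b+1)).1 && ~~ odd (P Hn true (2*a+2) (2*b+1)).2.
Proof. by parsolve. Qed.

Definition mkCXf n (Hn : (0 < 2*n)%N) a b : CXnode n :=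
  @exist (pos n) (fun p => odd p.1 && ~~ odd p.2) _ (pCXf Hn a b).
Definition mkCZf n (Hn : (0 < 2*n)%N) a b : CZnode n :=
  @exist (pos n) (fun p => ~~ odd p.1 && odd p.2) _ (pCZf Hn a b).
Definition mkCZt n (Hn : (0 < 2*n)%N) a b : CZnode n :=
  @exist (pos n) (fun p => ~~ odd p.1 && odd p.2) _ (pCZt Hn a b).
Definition mkCXt n (Hn : (0 < 2*n)%N) a b : CXnode n :=
  @exist (pos n) (fun p => odd p.1 && ~~ odd p.2) _ (pCXt Hn a b).

Lemma E6 n (Hn : (0 < 2*n)%N) t a b :
  grid_adj (P Hn t (2*a+2) (2*b+1)) (P Hn t (2*a+2) (2*b)) /\
  grid_adj (P Hn t (2*a+2) (2*b+1)) (P Hn t (2*(a+1)+1) (2*b+1)).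
Proof. by split; rewrite adjP; cnorm; rewrite ?eqxx ?orbT. Qed.

Lemma N14 n (Hn : (0 < 2*n)%N) t a b : (1 < n)%N ->
  [/\ grid_adj (P Hn t (2*a+1) (2*b)) (P Hn t (2*(a+1)+1) (2*b+1)) = false,
      grid_adj (P Hn t (2*a+1) (2*b)) (P Hn t (2*a+2) (2*(b+1))) = false,
      grid_adj (P Hn t (2*(a+1)+1) (2*b)) (P Hn t (2*a+1) (2*b+1)) = false &
      grid_adj (P Hn t (2*(a+1)+1) (2*b)) (P Hn t (2*a+2) (2*(b+1))) = false].
Proof.
move=> h; have h' b' : (b'.+1 == b' %[mod n])%N = false by rewrite eq_sym modS_neq.
by split; rewrite adjP; cnorm; rewrite ?modS_neq ?h' ?andbF ?andFb.
Qed.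

Lemma P_tr n (Hn : (0 < 2*n)%N) x y : P Hn true x y = P Hn false y x.
Proof. by []. Qed.
Lemma valCXf n (Hn : (0 < 2*n)%N) a b : val (mkCXf Hn a b) = P Hn false (2*a+1) (2*b).
Proof. by []. Qed.
Lemma valCZf n (Hn : (0 < 2*n)%N) a b : val (mkCZf Hn a b) = P Hn false (2*a+2) (2*b+1).
Proof. by []. Qed.
Lemma valCZt n (Hn : (0 < 2*n)%N) a b : val (mkCZt Hn a b) = P Hn true (2*a+1) (2*b).
Proof. by []. Qed.
Lemma valCXt n (Hn : (0 < 2*n)%N) a b : val (mkCXt Hn a b) = P Hn true (2*a+2) (2*b+1).
Proof. by []. Qed.

Lemma solve_lin (F : fieldType) (a x c : F) : a != 0 -> a * x + c = 0 -> x = - c / a.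
Proof. by move=> ha /eqP; rewrite addr_eq0 => /eqP <-; rewrite [_ / a]mulrC mulKf. Qed.

Lemma rot (F : comRingType) n (G : nat -> F) : G n = G 0%N ->
  \prod_(k < n) G (k+1)%N = \prod_(k < n) G k.
Proof.
case: n => [|n] hG; first by rewrite !big_ord0.
rewrite big_ord_recr big_ord_recl /= mulrC addn1 hG.
by congr (_ * _); apply: eq_bigr => k _; rewrite addn1.
Qed.

Lemma zprod n (Hn2 : (1 < n)%N) (Hn : (0 < 2*n)%N) (F : fieldType)
  (HX : CXnode n -> Vnode n -> F) (HZ : CZnode n -> Vnode n -> F)
  (HlX : is_labeling (@cxpos n) HX) (HlZ : is_labeling (@czpos n) HZ)
  (Hort : forall c f, \sum_e HX c e * HZ f e = 0)
  (Hcyc : cycles_product_one (@cxpos n) HX) :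
  \prod_(k < n) (HZ (mkCZt Hn 0 (k+1)) (mkEh Hn true 0 k) /
                 HZ (mkCZt Hn 0 (k+1)) (mkEh Hn true 0 (k+1))) = 1.
Proof.
pose d k := mkCXf Hn k 0; pose g k := mkEv Hn false k 0.
pose e k := mkEh Hn false k 0; pose Fk k := mkCZf Hn k 0.
have r1 k : mkCZt Hn 0 (k+1) = Fk k.
  apply: val_inj; apply/eqP; rewrite valCZt valCZf P_tr P_eq; cnorm; by rewrite !eqxx.
have r2 k : mkEh Hn true 0 k = e k.
  apply: val_inj; apply/eqP; rewrite !valEh P_tr P_eq; cnorm; by rewrite !eqxx.
have nzA k : HX (d k) (e k) != 0.
  by rewrite HlX /cxpos valCXf valEh; case: (E4 Hn false k 0).
have nzB k : HX (d (k+1)%N) (g k) != 0.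
  by rewrite HlX /cxpos valCXf valEv; case: (E4 Hn false k 0).
have nzC k : HZ (Fk k) (g k) != 0.
  by rewrite HlZ /czpos valCZf valEv; case: (E6 Hn false k 0).
have nzD k : HZ (Fk k) (e (k+1)%N) != 0.
  by rewrite HlZ /czpos valCZf valEh; case: (E6 Hn false k 0).
have neq k k' : e k != g k'.
  by rewrite -val_eqE valEh valEv P_eq; cnorm.
have Fadj k e' : HZ (Fk k) e' != 0 ->
   [|| e' == e k, e' == e (k+1)%N, e' == g k | e' == mkEv Hn false k 1].
  rewrite HlZ /czpos valCZf (P_of Hn false (val e')) [tfst _ _]decomp [tsnd _ _]decomp.
  move=> /E3; rewrite -!decomp -!P_of -!val_eqE valEh valEv.
  by rewrite -(valEh Hn false (k+1)) -(valEv Hn false k (0+1)).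
have eq1 k : HX (d k) (e k) * HZ (Fk k) (e k) + HX (d k) (g k) * HZ (Fk k) (g k) = 0.
  rewrite -(Hort (d k) (Fk k)) (@sum2g _ _ (fun e' => HX (d k) e' * HZ (Fk k) e') (e k) (g k)) //.
  move=> e'; rewrite mulf_eq0 negb_or => /andP [h1 /Fadj].
  case/or4P => /eqP ee; rewrite ee ?eqxx ?orbT //; move: h1; rewrite ee HlX /cxpos valCXf.
    by rewrite valEh; case: (N14 Hn false k 0 Hn2) => ->.
  by rewrite valEv; case: (N14 Hn false k 0 Hn2) => _ ->.
have eq2 k : HX (d (k+1)%N) (e (k+1)%N) * HZ (Fk k) (e (k+1)%N) +
             HX (d (k+1)%N) (g k) * HZ (Fk k) (g k) = 0.
  rewrite -(Hort (d (k+1)%N) (Fk k)).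
  rewrite (@sum2g _ _ (fun e' => HX (d (k+1)%N) e' * HZ (Fk k) e') (e (k+1)%N) (g k)) //.
  move=> e'; rewrite mulf_eq0 negb_or => /andP [h1 /Fadj].
  case/or4P => /eqP ee; rewrite ee ?eqxx ?orbT //; move: h1; rewrite ee HlX /cxpos valCXf.
    by rewrite valEh; case: (N14 Hn false k 0 Hn2) => _ _ ->.
  by rewrite valEv; case: (N14 Hn false k 0 Hn2) => _ _ _ ->.
have ratio k : HZ (Fk k) (e k) / HZ (Fk k) (e (k+1)%N) =
    (HX (d k) (g k) / HX (d k) (e k)) * (HX (d (k+1)%N) (e (k+1)%N) / HX (d (k+1)%N) (g k)).
  rewrite (solve_lin (nzA k) (eq1 k)) (solve_lin (nzA (k+1)%N) (eq2 k)).
  have := nzA k; have := nzA (k+1)%N; have := nzB k; have := nzC k.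
  move: (HX _ _) (HX _ _) (HX _ _) (HX _ _) (HZ _ _) => a1 a2 a3 a4 a5.
  move=> h1 h2 h3 h4.
  by field; rewrite h2 h4 h3 oppr_eq0 mulf_neq0.
have dn : d n = d 0%N.
  apply: val_inj; apply/eqP; rewrite !valCXf P_eq; cnorm; by rewrite modnn mod0n !eqxx.
have gn : g n = g 0%N.
  apply: val_inj; apply/eqP; rewrite !valEv P_eq; cnorm; by rewrite modnn mod0n !eqxx.
have en : e n = e 0%N.
  apply: val_inj; apply/eqP; rewrite !valEh P_eq; cnorm; by rewrite modnn mod0n !eqxx.
have gS (t : 'I_n) : g (ordS t) = g (t+1)%N.
  apply: val_inj; apply/eqP; rewrite !valEv P_eq; cnorm; by rewrite modn_mod !eqxx.
under eq_bigr do rewrite r1 !r2 ratio.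
rewrite big_split /=.
rewrite -(@rot _ _ (fun k => HX (d k) (g k) / HX (d k) (e k))) /=; last by rewrite dn gn en.
rewrite -big_split /=.
under eq_bigr => k _ do rewrite mulrA (divfK (nzA _)).
rewrite (eq_bigr (fun t : 'I_n => HX (d (t+1)%N) (g (ordS t)) / HX (d (t+1)%N) (g t)));
  last by move=> t _; rewrite gS.
apply: (Hcyc n (fun t : 'I_n => g t) (fun t : 'I_n => d (t+1)%N) Hn2).
- move=> t t' /(congr1 val); rewrite !valEv => /eqP; rewrite P_eq; cnorm => /andP [h _].
  by apply: val_inj; move: h; rewrite !modn_small // => /eqP.
- move=> t t' /(congr1 val); rewrite !valCXf => /eqP; rewrite P_eq; cnorm => /andP [h _].
  by apply: val_inj; move: h; rewrite !modn_small // => /eqP.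
- by move=> t; rewrite /cxpos valCXf valEv; case: (E4 Hn false t 0).
- by move=> t; rewrite gS /cxpos valCXf valEv; case: (E4 Hn false (t+1) 0).
Qed.

Local Open Scope ring_scope.

Unset Implicit Arguments.
Theorem lemma5 (n m : nat) (F : finFieldType)
  (HX : CXnode n -> Vnode n -> F) (HZ : CZnode n -> Vnode n -> F) :
  (2 <= n)%N ->
  #|F| = (2 ^ m)%N ->
  is_labeling (@cxpos n) HX ->
  is_labeling (@czpos n) HZ ->
  dual (code HZ) \subset code HX ->
  cycles_product_one (@cxpos n) HX ->
  ((exists2 x, x \in code HX :\: dual (code HZ) & wt x = n) /\
   (forall x, x \in code HX :\: dual (code HZ) -> (n <= wt x)%N)) /\
  ((exists2 x, x \in code HZ :\: dual (code HX) & wt x = n) /\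
   (forall x, x \in code HZ :\: dual (code HX) -> (n <= wt x)%N)).
Proof.
move=> hn2 hcard HlX HlZ Hsub Hcyc.
have Hn : (0 < 2*n)%N by rewrite muln_gt0 /= (ltnW hn2).
have two : (1 + 1 : F) = 0.
  exact: (pcharf0 (card_finPcharP hcard (isT : prime 2))).
have Hort c f : \sum_e HX c e * HZ f e = 0.
  have hy : [ffun e => HZ f e] \in dual (code HZ).
    rewrite inE; apply/forallP => x; apply/implyP; rewrite inE => /forallP /(_ f) /eqP H.
    apply/eqP; rewrite -[X in _ = X]H; apply: eq_bigr => v _; by rewrite ffunE mulrC.
  have := subsetP Hsub _ hy; rewrite inE => /forallP /(_ c) /eqP.
  by under eq_bigr do rewrite ffunE.
have Hort' f c : \sum_e HZ f e * HX c e = 0.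
  by rewrite -[RHS](Hort c f); apply: eq_bigr => e _; rewrite mulrC.
have vinjX : injective (@cxpos n) by move=> c c'; apply: val_inj.
have vinjZ : injective (@czpos n) by move=> c c'; apply: val_inj.
have HcX c : exists a b, cxpos c = P Hn false (2*a+1) (2*b).
  by apply: Hc_gen; case/andP: (valP c).
have HcZ c : exists a b, czpos c = P Hn true (2*a+1) (2*b).
  by apply: Hc_gen; case/andP: (valP c).
have kerP (C : finType) (H : C -> Vnode n -> F) x :
    x \in code H -> forall c, \sum_e H c e * x e = 0.
  by rewrite inE => /forallP h c; apply/eqP.
have lowX x : x \in code HX -> (wt x < n)%N -> x \in dual (code HZ).
  move=> hx hw; have [[b1 hb1] [a0 ha0]] := cuts Hn false hw.
  rewrite inE; apply/forallP => z; apply/implyP => hz; apply/eqP.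
  rewrite -[RHS](@lower n hn2 Hn false F _ _ _ _ HX HZ HlX HlZ vinjX HcX (mkCXf Hn)
    (fun _ _ => erefl) (mkCZf Hn) (fun _ _ => erefl) Hort x z (kerP _ _ _ hx) (kerP _ _ _ hz)
    a0 b1 hb1 ha0).
  by apply: eq_bigr => e _; rewrite mulrC.
have lowZ z : z \in code HZ -> (wt z < n)%N -> z \in dual (code HX).
  move=> hz hw; have [[b1 hb1] [a0 ha0]] := cuts Hn true hw.
  rewrite inE; apply/forallP => x; apply/implyP => hx; apply/eqP.
  rewrite -[RHS](@lower n hn2 Hn true F _ _ _ _ HZ HX HlZ HlX vinjZ HcZ (mkCZt Hn)
    (fun _ _ => erefl) (mkCXt Hn) (fun _ _ => erefl) Hort' z x (kerP _ _ _ hz) (kerP _ _ _ hx)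
    a0 b1 hb1 ha0).
  by apply: eq_bigr => e _; rewrite mulrC.
have HprodX : \prod_(k < n) (HX (mkCXf Hn 0 (k+1)) (mkEh Hn false 0 k) /
                            HX (mkCXf Hn 0 (k+1)) (mkEh Hn false 0 (k+1))) = 1.
  have EhS (t : 'I_n) : mkEh Hn false 0 (ordS t) = mkEh Hn false 0 (t+1).
    by rewrite /= mkEh_mod addn1.
  have H := Hcyc n (fun t : 'I_n => mkEh Hn false 0 t) (fun t : 'I_n => mkCXf Hn 0 (t+1)) hn2.
  rewrite (eq_bigr (fun t : 'I_n => (HX (mkCXf Hn 0 (t+1)) (mkEh Hn false 0 (ordS t)) /
                            HX (mkCXf Hn 0 (t+1)) (mkEh Hn false 0 t))^-1)); last first.
    by move=> t _; rewrite EhS invf_div.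
  rewrite prodfV H ?invr1 //.
  - move=> t t' /(congr1 val); rewrite !valEh => /eqP; rewrite P_eq; cnorm => /andP [_ h].
    by apply: val_inj; move: h; rewrite !modn_small // => /eqP.
  - move=> t t' /(congr1 val); rewrite !valCXf => /eqP; rewrite P_eq; cnorm => /andP [_ h].
    by apply: val_inj; move: h; rewrite !modn_small // => /eqP.
  - by move=> t; rewrite /cxpos valCXf valEh; case: (E4 Hn false 0 t).
  - by move=> t; rewrite EhS /cxpos valCXf valEh; case: (E4 Hn false 0 (t+1)).
have [x0 [hx0 wx0 sx0 x00]] := @loop n hn2 Hn false F _ _ HX HlX vinjX HcX (mkCXf Hn)
   (fun _ _ => erefl) two HprodX.
have [z0 [hz0 wz0 sz0 z00]] := @loop n hn2 Hn true F _ _ HZ HlZ vinjZ HcZ (mkCZt Hn)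
   (fun _ _ => erefl) two (@zprod n hn2 Hn F HX HZ HlX HlZ Hort Hcyc).
have E00 : mkEh Hn true 0 0 = mkEh Hn false 0 0 by apply: val_inj.
have pair : \sum_e x0 e * z0 e = 1.
  rewrite (@sum1 _ _ (fun e => x0 e * z0 e) (mkEh Hn false 0 0)) /=.
    by rewrite x00 -E00 z00 mulr1.
  move=> e ne; case: (x0 e =P 0) => [->|/eqP h1]; first by rewrite mul0r.
  case: (z0 e =P 0) => [->|/eqP h2]; first by rewrite mulr0.
  have [k hk] := sx0 e h1; have [k' hk'] := sz0 e h2.
  suff : e == mkEh Hn false 0 0 by rewrite (negbTE ne).
  rewrite -val_eqE valEh {1}hk P_eq; have := hk; rewrite hk' P_tr => /eqP; rewrite P_eq.
  by cnorm => /andP [_ /eqP ->]; rewrite !eqxx.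
have pair' : \sum_e z0 e * x0 e = 1.
  by rewrite -[RHS]pair; apply: eq_bigr => e _; rewrite mulrC.
have inX : x0 \in code HX by rewrite inE; apply/forallP => c; apply/eqP; exact: hx0.
have inZ : z0 \in code HZ by rewrite inE; apply/forallP => c; apply/eqP; exact: hz0.
split; split.
- exists x0 => //; apply/setDP; split => //.
  rewrite inE; apply/negP => /forallP /(_ z0) /implyP /(_ inZ).
  by rewrite pair' oner_eq0.
- move=> x /setDP [hx hnd]; rewrite leqNgt; apply/negP => hw.
  by move: hnd; rewrite (lowX x hx hw).
- exists z0 => //; apply/setDP; split => //.
  rewrite inE; apply/negP => /forallP /(_ x0) /implyP /(_ inX).
  by rewrite pair oner_eq0.
- move=> x /setDP [hx hnd]; rewrite leqNgt; apply/negP => hw.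
  by move: hnd; rewrite (lowZ x hx hw).
Qed.
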